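(* For every $n\ge1$, the map $S\mapsto[\mathrm{D}(S),\mathrm{E}(S)]$ is a bijection from the set $\mathcal{S}_n$ of sticky trees with $n$ edges onto the set of intervals of the Tamari lattice of order $n$.
   Context: Sticky trees: a plane tree is a rooted tree in which the children of every node are linearly ordered (left to right). The root has depth $0$, a child of a node of depth $d$ has depth $d+1$. The prefix order is: the root, followed by the prefix order of the subtree of its leftmost child, then of its second child, and so on. $S_u$ denotes the subtree rooted at $u$. A sticky tree is a plane tree $S$ with node set $V$ and a labeling $\ell:V\to\mathbb{N}$ such that: (1) every node $u$ of depth $d$ has $0\le\ell(u)\le d$; (2) every node $u$ of depth $d>0$ has some $v\in S_u$ (possibly $v=u$) with $\ell(v)<d$; (3) for every node $u$ of depth $d$, if some $v\in S_u$ has $\ell(v)=d$, then every node of $S_u$ (including $u$) preceding $v$ in prefix order has label at least $d$. The certificate of a non-root node $u$ of depth $d$ is the first node, in prefix order, of $S_u$ whose label is $<d$. The certificate-counting function $c:V\to\mathbb{N}$ assigns to each node $w$ the number of non-root nodes whose certificate is $w$. The words: $\mathrm{E}(S)$ is the word in $\{u,d\}$ obtained by the depth-first traversal of $S$ from the root visiting children left to right, writing $u$ for each move from a node to a child and $d$ for each move back to the parent. If $v_1,\dots,v_n$ are the non-root nodes of $S$ in prefix order, $\mathrm{D}(S)=u\,d^{c(v_1)}\,u\,d^{c(v_2)}\cdots u\,d^{c(v_n)}$. Dyck paths and Tamari lattice: a Dyck path of length $2n$ is a word in $\{u,d\}$ with $n$ letters $u$ and $n$ letters $d$ such that every prefix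 has at least as many $u$'s as $d$'s. The $i$-th letter $u$ of a Dyck path $D$ is matched with the letter $d$ following it such that the factor strictly between them is balanced; $\ell_D(i)$ is the length of that factor. $D\preceq_T E$ iff $\ell_D(i)\le\ell_E(i)$ for all $1\le i\le n$ (Tamari lattice of order $n$); a Tamari interval is a pair $[D,E]$ of Dyck paths of length $2n$ with $D\preceq_T E$. *)

(* Defs.v *)
From mathcomp Require Import all_boot.
Set Implicit Arguments. Unset Strict Implicit. Unset Printing Implicit Defensive.

(* A node carries its label and the ordered (left to right) list of its children. *)
Inductive ltree := LNode of nat & seq ltree.

Fixpoint tsize (t : ltree) : nat :=
  let: LNode _ ts := t in (sumn (map tsize ts)).+1.

Definition edges (t : ltree) : nat := (tsize t).-1.

(* Prefix-order list of nodes of a tree whose root has depth d: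
   each node is recorded as (depth, label, size of its subtree).
   The subtree S_u of the node of (global) prefix index i is the
   contiguous segment of indices i, ..., i + size - 1. *)
Fixpoint pre (d : nat) (t : ltree) : seq (nat * nat * nat) :=
  let: LNode l ts := t in (d, l, tsize t) :: flatten (map (pre d.+1) ts).

Section Nodes.
Variable S : ltree.
Definition nodesS := pre 0 S.
Definition nnodes := size nodesS.
Definition dep (i : nat) : nat := (nth (0,0,0) nodesS i).1.1.
Definition lab (i : nat) : nat := (nth (0,0,0) nodesS i).1.2.
Definition ssz (i : nat) : nat := (nth (0,0,0) nodesS i).2.
Definition sublabels (i : nat) : seq nat :=
  [seq x.1.2 | x <- take (ssz i) (drop i nodesS)].
End Nodes.

Definition sticky (S : ltree) : Prop :=
  (forall i, i < nnodes S -> lab S i <= dep S i) /\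
  (forall i, 0 < i < nnodes S -> has (fun l => l < dep S i) (sublabels S i)) /\
  (forall i, i < nnodes S -> forall j, j < size (sublabels S i) ->
     nth 0 (sublabels S i) j = dep S i ->
     all (fun l => dep S i <= l) (take j (sublabels S i))).

(* certificate (as a global prefix index) of the non-root node i:
   first node of S_i in prefix order with label < depth of i *)
Definition cert (S : ltree) (i : nat) : nat :=
  i + find (fun l => l < dep S i) (sublabels S i).

Definition ccount (S : ltree) (w : nat) : nat :=
  count (fun i => cert S i == w) (iota 1 (nnodes S).-1).

Definition u_ : bool := true.
Definition d_ : bool := false.

Fixpoint Ew (t : ltree) : seq bool :=
  let: LNode _ ts := t in flatten (map (fun s => u_ :: rcons (Ew s) d_) ts).

Definition Dw (S : ltree) : seq bool :=
  flatten [seq u_ :: nseq (ccount S v) d_ | v <- iota 1 (nnodes S).-1].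

Definition nups (w : seq bool) := count (fun b => b == u_) w.
Definition ndowns (w : seq bool) := count (fun b => b == d_) w.

Definition prefix_ok (w : seq bool) : bool :=
  all (fun k => ndowns (take k w) <= nups (take k w)) (iota 0 (size w).+1).

Definition balanced (w : seq bool) : bool := (nups w == ndowns w) && prefix_ok w.

Definition dyck (n : nat) (w : seq bool) : bool :=
  [&& size w == 2 * n, nups w == n & prefix_ok w].

(* position (0-based) of the i-th letter u (i counted from 1) *)
Definition pos_up (w : seq bool) (i : nat) : nat :=
  nth 0 [seq j <- iota 0 (size w) | nth d_ w j == u_] i.-1.

(* ell_w(i): length of the (balanced) factor strictly between the i-th u and
   its matching d *)
Definition ell (w : seq bool) (i : nat) : nat :=
  let p := pos_up w i in
  find (fun k => balanced (take k (drop p.+1 w)) && (nth u_ w (p.+1 + k) == d_))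
       (iota 0 (size w)).

Definition tamari_le (n : nat) (P Q : seq bool) : Prop :=
  forall i, 1 <= i <= n -> ell P i <= ell Q i.

(* Main.v *)
From mathcomp Require Import all_boot zify.
Require Import Defs.
Set Implicit Arguments. Unset Strict Implicit. Unset Printing Implicit Defensive.
Arguments nups : simpl never.
Arguments ndowns : simpl never.


Lemma nups_cat a b : nups (a ++ b) = nups a + nups b.
Proof. by rewrite /nups count_cat. Qed.
Lemma ndowns_cat a b : ndowns (a ++ b) = ndowns a + ndowns b.
Proof. by rewrite /ndowns count_cat. Qed.
Lemma nups_cons x a : nups (x :: a) = (x == u_) + nups a.
Proof. by []. Qed.
Lemma ndowns_cons x a : ndowns (x :: a) = (x == d_) + ndowns a.
Proof. by []. Qed.
Lemma nups_nil : nups [::] = 0. Proof. by []. Qed.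
Lemma ndowns_nil : ndowns [::] = 0. Proof. by []. Qed.
Lemma size_ud a : size a = nups a + ndowns a.
Proof.
elim: a => // x a IH; rewrite nups_cons ndowns_cons [size _]/= IH.
by case: x => /=; lia.
Qed.

Lemma prefix_okP w : reflect (forall k, ndowns (take k w) <= nups (take k w)) (prefix_ok w).
Proof.
apply: (iffP allP) => H.
  move=> k; case: (leqP k (size w)) => hk.
    by have := H k; rewrite mem_iota; apply; lia.
  rewrite take_oversize ?(ltnW hk) //; have := H (size w); rewrite take_size mem_iota; apply; lia.
by move=> k _; apply: H.
Qed.

Lemma balancedP w : balanced w <->
  nups w = ndowns w /\ forall k, ndowns (take k w) <= nups (take k w).
Proof.
rewrite /balanced; split.
  by case/andP=> /eqP -> /prefix_okP.
by case=> -> H; rewrite eqxx; apply/prefix_okP.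
Qed.

Fixpoint okp (h h' : nat) (w : seq bool) : bool :=
  match w with
  | [::] => h == h'
  | b :: w' => if b then okp h.+1 h' w' else (0 < h) && okp h.-1 h' w'
  end.

Lemma okpP h h' w : okp h h' w <->
  nups w + h = ndowns w + h' /\ forall k, ndowns (take k w) <= h + nups (take k w).
Proof.
elim: w h => [|b w IH] h.
  rewrite /= nups_nil ndowns_nil; split; first by move/eqP => ->; split => // k; rewrite take_nil nups_nil ndowns_nil.
  by case=> e _; apply/eqP; lia.
have tk : forall k, take k.+1 (b :: w) = b :: take k w by [].
case: b tk => tk.
  rewrite /= IH nups_cons ndowns_cons /=; split.
    case=> e H; split; first lia.
    case=> [|k]; first by rewrite take0 nups_nil ndowns_nil.
    by rewrite tk nups_cons ndowns_cons /=; have := H k; lia.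
  case=> e H; split; first lia.
  by move=> k; have := H k.+1; rewrite tk nups_cons ndowns_cons /=; lia.
rewrite /= nups_cons ndowns_cons /=; split.
  case/andP=> h0 /IH [e H]; split; first lia.
  case=> [|k]; first by rewrite take0 nups_nil ndowns_nil.
  by rewrite tk nups_cons ndowns_cons /=; have := H k; lia.
case=> e H; have h0 : 0 < h.
  by have := H 1; rewrite tk take0 nups_cons ndowns_cons nups_nil ndowns_nil /=; lia.
rewrite h0 /=; apply/IH; split; first lia.
by move=> k; have := H k.+1; rewrite tk nups_cons ndowns_cons /=; lia.
Qed.

Lemma balanced_okp w : balanced w <-> okp 0 0 w.
Proof.
rewrite balancedP okpP; split; case=> e H; split => //; by [lia | move=> k; have := H k; lia].
Qed.

Lemma okp_cat h1 h2 h3 a b : okp h1 h2 a -> okp h2 h3 b -> okp h1 h3 (a ++ b).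
Proof.
elim: a h1 => [|x a IH] h1 /=; first by move/eqP ->.
by case: x => //; [apply: IH | case/andP => -> /IH H /H].
Qed.

Lemma okp_shift h h' c a : okp h h' a -> okp (h + c) (h' + c) a.
Proof.
elim: a h => [|x a IH] h /=; first by move/eqP ->.
case: x; first exact: IH.
case/andP => h0 /IH; rewrite addn_gt0 h0 /=.
by have -> : (h + c).-1 = h.-1 + c by lia.
Qed.

Lemma balanced_nil : balanced [::]. Proof. by []. Qed.

Lemma balanced_cat a b : balanced a -> balanced b -> balanced (a ++ b).
Proof. rewrite !balanced_okp; exact: okp_cat. Qed.

Lemma balanced_wrap a b : balanced a -> balanced b -> balanced (u_ :: a ++ d_ :: b).
Proof.
rewrite !balanced_okp /= => oa ob; apply: okp_cat (okp_shift 1 oa) _ => /=.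
exact: ob.
Qed.

Lemma size_balanced w : balanced w -> size w = 2 * nups w.
Proof. by case/balancedP => e _; rewrite size_ud -e; lia. Qed.

(* a balanced word followed by d: the d-position is determined *)
Lemma balanced_no_d_prefix x j : balanced x -> j < size x ->
  balanced (take j x) -> nth u_ x j = d_ -> False.
Proof.
move=> /balancedP [_ px] hj /balancedP [ej _] hn.
have := px j.+1; rewrite (take_nth u_ hj) -cats1 nups_cat ndowns_cat hn ej /=.
rewrite /nups /ndowns /=; lia.
Qed.

Lemma firstd x1 x2 r1 r2 : balanced x1 -> balanced x2 ->
  x1 ++ d_ :: r1 = x2 ++ d_ :: r2 -> x1 = x2.
Proof.
wlog le12: x1 x2 r1 r2 / size x1 <= size x2.
  move=> W b1 b2 e; case: (leqP (size x1) (size x2)) => h; first exact: W e.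
  by symmetry; apply: (W x2 x1 r2 r1) => //; apply: ltnW.
move=> b1 b2 e.
case: (ltngtP (size x1) (size x2)) => h; last first.
- by have := congr1 (take (size x1)) e; rewrite !take_cat h ltnn subnn !take0 !cats0.
- by move: le12; rewrite leqNgt h.
exfalso; apply: (@balanced_no_d_prefix x2 (size x1)) => //.
  by have := congr1 (take (size x1)) e; rewrite !take_cat h ltnn subnn take0 cats0 => <-.
have := congr1 (nth u_ ^~ (size x1)) e; rewrite !nth_cat h ltnn subnn /= => ->.
by [].
Qed.

Lemma find_iota_eq (p : pred nat) N k : k < N -> p k ->
  (forall j, j < k -> ~~ p j) -> find p (iota 0 N) = k.
Proof.
move=> hk pk hb.
have hh : has p (iota 0 N) by apply/hasP; exists k => //; rewrite mem_iota; lia.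
have hf : find p (iota 0 N) < N by move: hh; rewrite has_find size_iota.
case: (ltngtP (find p (iota 0 N)) k) => // h.
- have := nth_find 0 hh; rewrite nth_iota //= add0n => pf.
  by have := hb _ h; rewrite pf.
- have := before_find 0 h; rewrite nth_iota; last lia.
  by rewrite add0n pk.
Qed.

Lemma find_nth_eq (p : pred nat) (s : seq nat) k : k < size s -> p (nth 0 s k) ->
  (forall j, j < k -> ~~ p (nth 0 s j)) -> find p s = k.
Proof.
move=> hk pk hb.
have hh : has p s by apply/(has_nthP 0); exists k.
have hf : find p s < size s by rewrite -has_find.
case: (ltngtP (find p s) k) => // h.
- by have := hb _ h; rewrite (nth_find 0 hh).
- by have := before_find 0 h; rewrite pk.
Qed.

Lemma pos_up_eq A R i : nups A = i.-1 -> 0 < i -> pos_up (A ++ u_ :: R) i = size A.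
Proof.
move=> hA hi; rewrite /pos_up size_cat iotaD filter_cat.
have e1 : [seq j <- iota 0 (size A) | nth d_ (A ++ u_ :: R) j == u_] =
          [seq j <- iota 0 (size A) | nth d_ A j == u_].
  by apply: eq_in_filter => j; rewrite mem_iota => /andP [_ hj]; rewrite nth_cat hj.
have e2 : size [seq j <- iota 0 (size A) | nth d_ A j == u_] = nups A.
  by rewrite size_filter /nups -(count_map (nth d_ A) (fun b => b == u_)) map_nth_iota0 // take_size.
rewrite e1 nth_cat e2 hA ltnn subnn /= add0n.
by rewrite nth_cat ltnn subnn.
Qed.

Lemma nth_shift (x y : bool) A C k : nth x (A ++ y :: C) ((size A).+1 + k) = nth x C k.
Proof.
rewrite nth_cat ifF; last by apply/negbTE; rewrite -leqNgt; lia.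
by have -> : (size A).+1 + k - size A = k.+1 by lia.
Qed.

Lemma ell_eq A X B i : nups A = i.-1 -> 0 < i -> balanced X ->
  ell (A ++ u_ :: X ++ d_ :: B) i = size X.
Proof.
move=> hA hi bX; rewrite /ell pos_up_eq //.
have ed : drop (size A).+1 (A ++ u_ :: X ++ d_ :: B) = X ++ d_ :: B.
  by rewrite -cat_rcons drop_cat size_rcons ltnn subnn drop0.
rewrite ed; apply: find_iota_eq.
- by rewrite size_cat /= size_cat /=; lia.
- by rewrite take_cat ltnn subnn take0 cats0 bX nth_shift nth_cat ltnn subnn.
move=> j hj; apply/negP => /andP [hb hn].
apply: (@balanced_no_d_prefix X j) => //.
  by move: hb; rewrite take_cat hj.
by move/eqP: hn; rewrite nth_shift nth_cat hj.
Qed.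

Lemma okp_split w : forall h, okp h.+1 0 w ->
  exists X Y, [/\ w = X ++ d_ :: Y, okp 0 0 X & okp h 0 Y].
Proof.
elim: {w}(size w) {-2}w (leqnn (size w)) => [|N IHN] w.
  by case: w.
case: w => [|[] w] //= hs h.
  move=> /(IHN w hs h.+1) [X1 [Y1 [e1 o1 o2]]].
  have hs2 : size Y1 <= N by move: hs; rewrite e1 size_cat /=; lia.
  have [X2 [Y2 [e2 o3 o4]]] := IHN Y1 hs2 h o2.
  exists (u_ :: X1 ++ d_ :: X2), Y2; split => //.
    by rewrite e1 e2 /= -catA.
  by rewrite /=; apply: okp_cat (okp_shift 1 o1) _ => /=.
by move=> o; exists [::], w.
Qed.

Lemma first_return w : balanced w -> w != [::] ->
  exists X Y, [/\ w = u_ :: X ++ d_ :: Y, balanced X & balanced Y].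
Proof.
rewrite balanced_okp; case: w => [|[] w] //= o _.
have [X [Y [e o1 o2]]] := okp_split o.
by exists X, Y; split; [rewrite e | apply/balanced_okp | apply/balanced_okp].
Qed.

Lemma balanced_ind (P : seq bool -> Prop) : P [::] ->
  (forall X Y, balanced X -> balanced Y -> P X -> P Y -> P (u_ :: X ++ d_ :: Y)) ->
  forall w, balanced w -> P w.
Proof.
move=> P0 PS w; elim: {w}(size w) {-2}w (leqnn (size w)) => [|N IHN] w.
  by case: w.
move=> hs bw; case: (altP (w =P [::])) => [->|nw] //.
have [X [Y [e bX bY]]] := first_return bw nw.
rewrite e; apply: PS => //; apply: IHN => //; move: hs; rewrite e /= size_cat /=; lia.
Qed.

Definition cnt (m : nat -> nat) a b v := count (fun i => m i == v) (iota a (b - a)).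
Definition Wm m a b := flatten [seq u_ :: nseq (cnt m a b v) d_ | v <- iota a (b - a)].
Definition validm (m : nat -> nat) a b := forall i, a <= i < b ->
  i <= m i < b /\ forall j, i < j <= m i -> m j <= m i.

Lemma count0 (p : pred nat) s : (forall x, x \in s -> ~~ p x) -> count p s = 0.
Proof. by move=> H; apply/eqP; rewrite -leqn0 leqNgt -has_count; apply/hasPn. Qed.

Lemma WE m m' a b : (forall i, a <= i < b -> m i = m' i) -> Wm m a b = Wm m' a b.
Proof.
move=> H; rewrite /Wm /cnt; congr flatten; apply: eq_map => v.
congr (_ :: nseq _ _); apply: eq_in_count => i; rewrite mem_iota => hi.
by rewrite H //; lia.
Qed.

Lemma valid_sub1 m a b : validm m a b -> a < b -> validm m a.+1 (m a).+1.
Proof.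
move=> V ab i hi; have [h3 h4] := V a ltac:(lia).
have [h1 h2] := V i ltac:(lia); split => //.
have := h4 i ltac:(lia); lia.
Qed.

Lemma valid_sub2 m a b : validm m a b -> a < b -> validm m (m a).+1 b.
Proof. move=> V ab i hi; have [h3 h4] := V a ltac:(lia); apply: V; lia. Qed.

Lemma nups_nseq k : nups (nseq k d_) = 0.
Proof. by elim: k. Qed.

Lemma nups_flatten_blocks (f : nat -> nat) s :
  nups (flatten [seq u_ :: nseq (f v) d_ | v <- s]) = size s.
Proof.
elim: s => // v s IH; rewrite /= nups_cons nups_cat nups_nseq IH /=; lia.
Qed.

Lemma nups_Wm m a b : nups (Wm m a b) = b - a.
Proof. by rewrite /Wm nups_flatten_blocks size_iota. Qed.

Lemma nseqS_cat (x : bool) k F : nseq k.+1 x ++ F = nseq k x ++ x :: F.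
Proof. by elim: k => //= k ->. Qed.

Lemma DEC m a b : validm m a b -> a < b ->
  Wm m a b = u_ :: Wm m a.+1 (m a).+1 ++ d_ :: Wm m (m a).+1 b.
Proof.
move=> V ab; have [/andP [h1 h2] h3] := V a ltac:(lia).
set c := m a in h1 h2 h3 *.
have hi : iota a (b - a) = a :: iota a.+1 (c - a) ++ iota c.+1 (b - c.+1).
  have -> : b - a = (c - a).+1 + (b - c.+1) by lia.
  by rewrite iotaD /=; congr (_ :: _ ++ iota _ _); lia.
have cnt_split : forall v, cnt m a b v =
   (m a == v) + count (fun i => m i == v) (iota a.+1 (c - a)) +
   count (fun i => m i == v) (iota c.+1 (b - c.+1)).
  by move=> v; rewrite /cnt hi /= count_cat addnA.
have L2z : forall v, v <= c -> count (fun i => m i == v) (iota c.+1 (b - c.+1)) = 0.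
  move=> v hv; apply: count0 => i; rewrite mem_iota => hi'.
  have [/andP [h4 h5] _] := V i ltac:(lia); apply/eqP; lia.
have L1z : forall v, c < v -> count (fun i => m i == v) (iota a.+1 (c - a)) = 0.
  move=> v hv; apply: count0 => i; rewrite mem_iota => hi'.
  have := h3 i ltac:(lia); apply/contraL => /eqP; lia.
have L2e : forall v, c < v -> cnt m a b v = cnt m c.+1 b v.
  by move=> v hv; rewrite cnt_split L1z // /cnt; have /negbTE -> : c != v by lia.
have tail : flatten [seq u_ :: nseq (cnt m a b v) d_ | v <- iota c.+1 (b - c.+1)] = Wm m c.+1 b.
  rewrite /Wm; congr flatten; apply/eq_in_map => v; rewrite mem_iota => hv.
  by rewrite L2e //; lia.
rewrite {1}/Wm hi map_cons map_cat [flatten (_ :: _)]/= flatten_cat tail.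
case: (ltngtP a c) h1 => // hac _.
- have e0 : cnt m a b a = 0.
    rewrite cnt_split L2z; last lia.
    rewrite count0 /=; last by move=> i; rewrite mem_iota => hi'; have [/andP [? ?] _] := V i ltac:(lia); apply/eqP; lia.
    by have /negbTE -> : c != a by lia.
  rewrite e0 /=; congr (_ :: _).
  have hi1 : iota a.+1 (c - a) = iota a.+1 (c - a.+1) ++ [:: c].
    have -> : c - a = (c - a.+1) + 1 by lia.
    by rewrite iotaD /=; congr (_ ++ [:: _]); lia.
  rewrite /Wm subSS hi1 !map_cat !flatten_cat /= !cats0 -!catA; congr (_ ++ _).
    congr flatten; apply/eq_in_map => v; rewrite mem_iota => hv.
    rewrite cnt_split L2z; last lia.
    have /negbTE -> : c != v by lia.
    by rewrite /cnt subSS /= addn0.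
  have -> : cnt m a b c = (cnt m a.+1 c.+1 c).+1.
    by rewrite cnt_split L2z // eqxx /cnt subSS; lia.
  by rewrite /=; congr (_ :: _); elim: (cnt _ _ _ _) => //= k ->.
- have e1 : cnt m a b a = 1.
    rewrite cnt_split L2z; last lia.
    have ha : m a = a by symmetry; exact: hac.
    by rewrite ha eqxx -hac subnn.
  by rewrite e1 -hac subnn /= /Wm subnn.
Qed.

Lemma Wm_nil m a b : b <= a -> Wm m a b = [::].
Proof. by move=> h; rewrite /Wm; have -> : b - a = 0 by lia. Qed.

Lemma WB_k m : forall k a b, b - a <= k -> validm m a b -> balanced (Wm m a b).
Proof.
elim=> [|k IH] a b hk V.
  by rewrite Wm_nil //; lia.
case: (leqP b a) => ab; first by rewrite Wm_nil.
have [/andP [h1 h2] _] := V a ltac:(lia).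
rewrite DEC //; apply: balanced_wrap; apply: IH.
- lia.
- exact: (valid_sub1 V ab).
- lia.
- exact: (valid_sub2 V ab).
Qed.

Lemma WB m a b : validm m a b -> balanced (Wm m a b).
Proof. exact: (@WB_k m (b - a)). Qed.

Lemma WD_k m : forall k a b, b - a <= k -> validm m a b -> forall i, a <= i < b ->
  exists A X B, [/\ Wm m a b = A ++ u_ :: X ++ d_ :: B, nups A = i - a,
                    balanced X & nups X = m i - i].
Proof.
elim=> [|k IH] a b hk V i hi; first lia.
have [/andP [h1 h2] _] := V a ltac:(lia).
rewrite DEC //; last lia.
case: (ltngtP i a) => hia; first lia.
- case: (leqP i (m a)) => him.
    have [A [X [B [e1 e2 e3 e4]]]] := IH a.+1 (m a).+1 ltac:(lia) (valid_sub1 V ltac:(lia)) i ltac:(lia).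
    exists (u_ :: A), X, (B ++ d_ :: Wm m (m a).+1 b); split => //.
      by rewrite e1 /= -!catA /= -!catA.
    by rewrite nups_cons e2 /=; lia.
  have [A [X [B [e1 e2 e3 e4]]]] := IH (m a).+1 b ltac:(lia) (valid_sub2 V ltac:(lia)) i ltac:(lia).
  exists (u_ :: Wm m a.+1 (m a).+1 ++ d_ :: A), X, B; split => //.
    by rewrite e1 /= -catA.
  by rewrite nups_cons nups_cat nups_cons e2 nups_Wm /=; lia.
- subst i; exists [::], (Wm m a.+1 (m a).+1), (Wm m (m a).+1 b); split => //.
  + by rewrite nups_nil subnn.
  + by apply: WB; apply: (valid_sub1 V); lia.
  + by rewrite nups_Wm; lia.
Qed.

Lemma ellW m a b i : validm m a b -> a <= i < b ->
  ell (Wm m a b) (i - a).+1 = 2 * (m i - i).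
Proof.
move=> V hi; have [A [X [B [e1 e2 e3 e4]]]] := @WD_k m (b - a) a b (leqnn _) V i hi.
by rewrite e1 ell_eq // size_balanced // e4.
Qed.

Lemma Gp w : balanced w -> forall a, exists m,
  validm m a (a + nups w) /\ w = Wm m a (a + nups w).
Proof.
move: w; apply: (@balanced_ind (fun w => forall a, exists m,
  validm m a (a + nups w) /\ w = Wm m a (a + nups w))).
  by move=> a; exists (fun _ => 0); split; [move=> i; rewrite nups_nil; lia | rewrite Wm_nil // nups_nil; lia].
move=> X Y bX bY IHX IHY a.
have [m1 [V1 E1]] := IHX a.+1.
set c := a + nups X.
have [m2 [V2 E2]] := IHY c.+1.
pose m i := if i == a then c else if i <= c then m1 i else m2 i.
have en : a + nups (u_ :: X ++ d_ :: Y) = c.+1 + nups Y.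
  by rewrite nups_cons nups_cat nups_cons /= /c; lia.
rewrite en; exists m.
have V : validm m a (c.+1 + nups Y).
  move=> i hi; rewrite /m.
  case: (eqVneq i a) => [->|hia].
    split; first lia.
    move=> j hj; have /negbTE -> : j != a by lia.
    have -> : j <= c by lia.
    by have [/andP [? ?] _] := V1 j ltac:(lia); lia.
  case: (leqP i c) => hic.
    have [/andP [? ?] H] := V1 i ltac:(lia).
    split; first lia.
    move=> j hj; have /negbTE -> : j != a by lia.
    have -> : j <= c by lia.
    exact: H.
  have [/andP [? ?] H] := V2 i ltac:(lia).
  split; first lia.
  move=> j hj; have /negbTE -> : j != a by lia.
  have /negbTE -> : ~~ (j <= c) by lia.
  exact: H.
split => //.
rewrite DEC //; last lia.
have -> : m a = c by rewrite /m eqxx.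
congr (_ :: _ ++ _ :: _).
  rewrite {1}E1; have -> : a.+1 + nups X = c.+1 by rewrite /c; lia.
  apply: WE => i hi; rewrite /m; have /negbTE -> : i != a by lia.
  by have -> : i <= c by lia.
rewrite {1}E2; apply: WE => i hi; rewrite /m; have /negbTE -> : i != a by lia.
by have /negbTE -> : ~~ (i <= c) by lia.
Qed.

Fixpoint allP (P : ltree -> Prop) (ts : seq ltree) : Prop :=
  match ts with [::] => True | s :: ts' => P s /\ allP P ts' end.

Definition ltree_ind2 (P : ltree -> Prop)
  (H : forall l ts, allP P ts -> P (LNode l ts)) : forall t, P t :=
  fix F t := match t with
  | LNode l ts => H l ts ((fix G ts : allP P ts :=
        match ts as ts0 return allP P ts0 with
        | [::] => I
        | s :: ts' => conj (F s) (G ts')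
        end) ts)
  end.

Definition blk s := u_ :: rcons (Ew s) d_.
Definition preF d ts := flatten (map (pre d) ts).
Definition EF ts := flatten (map blk ts).
Definition rootl (t : ltree) := let: LNode l _ := t in l.

Lemma pre_eq d l ts : pre d (LNode l ts) = (d, l, (sumn (map tsize ts)).+1) :: preF d.+1 ts.
Proof. by []. Qed.
Lemma Ew_eq l ts : Ew (LNode l ts) = EF ts.
Proof. by []. Qed.
Lemma tsize_eq l ts : tsize (LNode l ts) = (sumn (map tsize ts)).+1.
Proof. by []. Qed.
Lemma tsize_gt0 t : 0 < tsize t.
Proof. by case: t. Qed.

Lemma allP_mid P ts1 s ts2 : allP P (ts1 ++ s :: ts2) -> P s.
Proof. by elim: ts1 => [|x ts1 IH] /=; [case | case=> _]. Qed.

Lemma size_pre d t : size (pre d t) = tsize t.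
Proof.
move: t d; apply: ltree_ind2 => l ts IH d.
rewrite pre_eq tsize_eq /= /preF; congr _.+1.
elim: ts IH => // s ts IHts [Hs Hts] /=.
by rewrite size_cat Hs IHts.
Qed.

Lemma size_preF d ts : size (preF d ts) = sumn (map tsize ts).
Proof. by elim: ts => //= s ts IH; rewrite /preF /= size_cat size_pre -/(preF _ _) IH. Qed.

Lemma EF_cat ts1 ts2 : EF (ts1 ++ ts2) = EF ts1 ++ EF ts2.
Proof. by rewrite /EF map_cat flatten_cat. Qed.
Lemma preF_cat d ts1 ts2 : preF d (ts1 ++ ts2) = preF d ts1 ++ preF d ts2.
Proof. by rewrite /preF map_cat flatten_cat. Qed.
Lemma EF_cons s ts : EF (s :: ts) = u_ :: Ew s ++ d_ :: EF ts.
Proof. by rewrite /EF /= /blk -cats1 -catA. Qed.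
Lemma preF_cons d s ts : preF d (s :: ts) = pre d s ++ preF d ts.
Proof. by []. Qed.

Lemma Ew_props t : balanced (Ew t) /\ nups (Ew t) = (tsize t).-1.
Proof.
move: t; apply: ltree_ind2 => l ts IH.
rewrite Ew_eq tsize_eq /=.
elim: ts IH => [|s ts IHts]; first by split; [exact: balanced_nil | rewrite /EF nups_nil].
case=> [[Hb Hn] Hts].
have [b2 n2] := IHts Hts.
rewrite EF_cons; split; first exact: balanced_wrap.
rewrite nups_cons nups_cat nups_cons Hn n2 /=.
by have := tsize_gt0 s; lia.
Qed.

Lemma nups_EF ts : nups (EF ts) = sumn (map tsize ts).
Proof.
elim: ts => [|s ts IH]; first by rewrite /EF nups_nil.
rewrite EF_cons nups_cons nups_cat nups_cons IH (proj2 (Ew_props s)) /=.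
by have := tsize_gt0 s; lia.
Qed.

Lemma FD ts j : j < sumn (map tsize ts) -> exists ts1 s ts2,
  ts = ts1 ++ s :: ts2 /\ sumn (map tsize ts1) <= j < sumn (map tsize ts1) + tsize s.
Proof.
elim: ts j => [|s ts IH] j //= hj.
case: (ltnP j (tsize s)) => h.
  by exists [::], s, ts; split => //=; lia.
have [ts1 [s' [ts2 [e h2]]]] := IH (j - tsize s) ltac:(lia).
exists (s :: ts1), s', ts2; split; first by rewrite e.
rewrite /=; lia.
Qed.

Lemma SUB t : forall d i, i < tsize t -> exists e t',
  [/\ i + tsize t' <= tsize t, take (tsize t') (drop i (pre d t)) = pre e t', d <= e,
      (0 < i -> d < e) &
      (0 < i -> exists A B, Ew t = A ++ u_ :: Ew t' ++ d_ :: B /\ nups A = i.-1)].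
Proof.
move: t; apply: ltree_ind2 => l ts IH d [|i] hi.
  exists d, (LNode l ts); split => //.
  by rewrite drop0 take_oversize // size_pre.
rewrite tsize_eq ltnS in hi.
have [ts1 [s [ts2 [ets hj]]]] := FD hi.
have Hs := IH; rewrite ets in Hs; move: Hs => /allP_mid Hs.
set o := sumn (map tsize ts1) in hj.
have hsz : tsize (LNode l ts) = o + tsize s + sumn (map tsize ts2) + 1.
  by rewrite tsize_eq ets map_cat sumn_cat /=; lia.
have hdrop : drop i.+1 (pre d (LNode l ts)) = drop (i - o) (pre d.+1 s ++ preF d.+1 ts2).
  rewrite pre_eq ets preF_cat preF_cons /= drop_cat size_preF -/o.
  by rewrite ltnNge (proj1 (andP hj)) /=.
have hEw : Ew (LNode l ts) = EF ts1 ++ u_ :: Ew s ++ d_ :: EF ts2.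
  by rewrite Ew_eq ets EF_cat EF_cons.
case: (posnP (i - o)) => hk.
  exists d.+1, s; split.
  - by rewrite hsz; lia.
  - by rewrite hdrop hk drop0 take_cat size_pre ltnn subnn take0 cats0.
  - by lia.
  - by lia.
  - move=> _; exists (EF ts1), (EF ts2); split => //.
    by rewrite nups_EF -/o /=; lia.
have [e [t' [h1 h2 h3 h4 h5]]] := Hs d.+1 (i - o) ltac:(lia).
exists e, t'; split.
- by rewrite hsz; lia.
- rewrite hdrop drop_cat size_pre ifT; last lia.
  by rewrite takel_cat ?h2 // size_drop size_pre; lia.
- by have := h4 hk; lia.
- by have := h4 hk; lia.
- move=> _; have [A [B [eA nA]]] := h5 hk.
  exists (EF ts1 ++ u_ :: A), (B ++ d_ :: EF ts2); split.
    by rewrite hEw eA -!catA /= -!catA.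
  rewrite nups_cat nups_cons nups_EF -/o nA /=; lia.
Qed.

Definition x0 : nat * nat * nat := (0, 0, 0).
Definition pd (L : seq (nat * nat * nat)) i := (nth x0 L i).1.1.
Definition pl (L : seq (nat * nat * nat)) i := (nth x0 L i).1.2.
Definition ps (L : seq (nat * nat * nat)) i := (nth x0 L i).2.

Lemma pre_head e t : nth x0 (pre e t) 0 = (e, rootl t, tsize t).
Proof. by case: t. Qed.

Lemma NODE t d i : i < tsize t -> exists e t',
  [/\ i + tsize t' <= tsize t, take (tsize t') (drop i (pre d t)) = pre e t',
      nth x0 (pre d t) i = (e, rootl t', tsize t'), d <= e &
      ((0 < i -> d < e) /\
      (0 < i -> exists A B, Ew t = A ++ u_ :: Ew t' ++ d_ :: B /\ nups A = i.-1))].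
Proof.
move=> hi; have [e [t' [h1 h2 h3 h4 h5]]] := SUB d hi.
exists e, t'; split => //.
by rewrite -[i]addn0 -nth_drop -(@nth_take (tsize t')) ?tsize_gt0 // h2 pre_head.
Qed.

Lemma BND t d i : i < tsize t ->
  [/\ i + ps (pre d t) i <= tsize t, 0 < ps (pre d t) i, d <= pd (pre d t) i &
      (0 < i -> d < pd (pre d t) i)].
Proof.
move=> hi; have [e [t' [h1 h2 h3 h4 [h5 _]]]] := NODE d hi.
by rewrite /ps /pd h3 /=; split => //; exact: tsize_gt0.
Qed.

Lemma LAM t d i j : i < tsize t -> i < j < i + ps (pre d t) i ->
  j + ps (pre d t) j <= i + ps (pre d t) i /\ pd (pre d t) i < pd (pre d t) j.
Proof.
move=> hi hj; have [e [t' [h1 h2 h3 h4 [h5 _]]]] := NODE d hi.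
move: hj; rewrite /ps /pd h3 /= => hj.
have ej : nth x0 (pre d t) j = nth x0 (pre e t') (j - i).
  by rewrite -h2 nth_take; [rewrite nth_drop subnKC //; lia | lia].
have hk : j - i < tsize t' by lia.
have [k1 k2 k3 k4] := BND e hk.
rewrite ej; move: k1 k4; rewrite /ps /pd => k1 k4.
have := k4 ltac:(lia); lia.
Qed.

Lemma NTHF d l ts1 s ts2 k : k < tsize s ->
  nth x0 (pre d (LNode l (ts1 ++ s :: ts2))) ((sumn (map tsize ts1)).+1 + k) =
  nth x0 (pre d.+1 s) k.
Proof.
move=> hk; rewrite pre_eq preF_cat preF_cons addSn /= nth_cat size_preF ifF; last lia.
by rewrite addKn nth_cat size_pre hk.
Qed.

Lemma ANC t : forall d w f, w < tsize t -> d <= f <= pd (pre d t) w ->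
  exists v, v <= w < v + ps (pre d t) v /\ pd (pre d t) v = f.
Proof.
move: t; apply: ltree_ind2 => l ts IH d w f hw hf.
case: (eqVneq f d) => [->|hfd].
  by exists 0; rewrite /ps /pd pre_eq /=; rewrite tsize_eq in hw.
case: w hw hf => [|w] hw hf.
  by move: hf; rewrite /pd pre_eq /=; lia.
rewrite tsize_eq ltnS in hw.
have [ts1 [s [ts2 [ets hj]]]] := FD hw.
have Hs := IH; rewrite ets in Hs; move: Hs => /allP_mid Hs.
set o := sumn (map tsize ts1) in hj.
have hk : w - o < tsize s by lia.
have ew : w.+1 = o.+1 + (w - o) by lia.
move: hf; rewrite /pd ets ew NTHF // => hf.
have hf2 : d.+1 <= f <= pd (pre d.+1 s) (w - o) by rewrite /pd; move/eqP: hfd; lia.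
have [v' [h1 h2]] := Hs d.+1 (w - o) f hk hf2.
have hv' : v' < tsize s by lia.
exists (o.+1 + v'); rewrite /ps /pd NTHF //; split => //.
move: h1; rewrite /ps; lia.
Qed.

Lemma RL t : forall d (f : nat -> nat), exists t',
  [/\ Ew t' = Ew t, tsize t' = tsize t &
      forall i, i < tsize t -> nth x0 (pre d t') i = (pd (pre d t) i, f i, ps (pre d t) i)].
Proof.
move: t; apply: ltree_ind2 => l ts IH d f.
have HF : forall (g : nat -> nat), exists ts', [/\ EF ts' = EF ts, map tsize ts' = map tsize ts &
   forall i, i < sumn (map tsize ts) ->
     nth x0 (preF d.+1 ts') i = ((nth x0 (preF d.+1 ts) i).1.1, g i, (nth x0 (preF d.+1 ts) i).2)].
  elim: ts IH {f} => [|s ts IHts] IH g; first by exists [::].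
  case: IH => Hs Hts.
  have [s' [e1 e2 e3]] := Hs d.+1 g.
  have [ts' [f1 f2 f3]] := IHts Hts (fun i => g (tsize s + i)).
  exists (s' :: ts'); split.
  - by rewrite !EF_cons e1 f1.
  - by rewrite /= e2 f2.
  move=> i hi; rewrite !preF_cons !nth_cat !size_pre e2.
  case: ifP => h; first by rewrite e3.
  rewrite f3 /=; last by move: hi h => /=; lia.
  by rewrite subnKC //; lia.
have [ts' [f1 f2 f3]] := HF (fun i => f i.+1).
exists (LNode (f 0) ts'); split.
- by rewrite !Ew_eq.
- by rewrite !tsize_eq f2.
case=> [|i] hi; first by rewrite /pd /ps !pre_eq /= f2.
by rewrite /pd /ps !pre_eq /= f3.
Qed.

Lemma EF_split s1 r1 ts2 : EF (s1 :: r1) = EF ts2 ->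
  exists s2 r2, [/\ ts2 = s2 :: r2, Ew s1 = Ew s2 & EF r1 = EF r2].
Proof.
case: ts2 => [|s2 r2]; first by rewrite EF_cons /EF.
rewrite !EF_cons => [[e]].
have e1 := firstd (proj1 (Ew_props s1)) (proj1 (Ew_props s2)) e.
exists s2, r2; split => //.
by move: e; rewrite e1 => /eqP; rewrite eqseq_cat // => /andP [_ /eqP [h]].
Qed.

Lemma tsize_Ew s1 s2 : Ew s1 = Ew s2 -> tsize s1 = tsize s2.
Proof.
move=> e; have := proj2 (Ew_props s1); have := proj2 (Ew_props s2).
rewrite e => ->; have := tsize_gt0 s1; have := tsize_gt0 s2; lia.
Qed.

Lemma SHAPE t1 : forall t2 d, Ew t1 = Ew t2 ->
  [seq (x.1.1, x.2) | x <- pre d t1] = [seq (x.1.1, x.2) | x <- pre d t2].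
Proof.
move: t1; apply: ltree_ind2 => l1 ts1 IH [l2 ts2] d.
rewrite !Ew_eq !pre_eq => e /=.
have -> : sumn (map tsize ts1) = sumn (map tsize ts2) by rewrite -!nups_EF e.
congr (_ :: _).
elim: ts1 ts2 IH e => [|s1 r1 IHr] ts2 IH e.
  by case: ts2 e => // s2 r2; rewrite EF_cons /EF.
have [s2 [r2 [-> e1 e2]]] := EF_split e.
case: IH => Hs Hr.
by rewrite !preF_cons !map_cat (Hs s2 d.+1 e1) (IHr r2 Hr e2).
Qed.

Lemma INJ t1 : forall t2 d, Ew t1 = Ew t2 ->
  [seq x.1.2 | x <- pre d t1] = [seq x.1.2 | x <- pre d t2] -> t1 = t2.
Proof.
move: t1; apply: ltree_ind2 => l1 ts1 IH [l2 ts2] d.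
rewrite !Ew_eq !pre_eq => e /= [el ef]; rewrite el; congr LNode.
elim: ts1 ts2 IH e ef => [|s1 r1 IHr] ts2 IH e ef.
  by case: ts2 e {ef} => // s2 r2; rewrite EF_cons /EF.
have [s2 [r2 [ets e1 e2]]] := EF_split e; subst ts2.
case: IH => Hs Hr.
move: ef; rewrite !preF_cons !map_cat => /eqP; rewrite eqseq_cat; last by rewrite !size_map !size_pre (tsize_Ew e1).
case/andP => /eqP h1 /eqP h2.
by rewrite (Hs s2 d.+1 e1 h1) (IHr r2 Hr e2 h2).
Qed.

Lemma nnodesE S : nnodes S = tsize S.
Proof. by rewrite /nnodes /nodesS size_pre. Qed.

Lemma depE S i : dep S i = pd (pre 0 S) i. Proof. by []. Qed.
Lemma labE S i : lab S i = pl (pre 0 S) i. Proof. by []. Qed.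
Lemma sszE S i : ssz S i = ps (pre 0 S) i. Proof. by []. Qed.

Lemma BNDS S i : i < tsize S ->
  [/\ i + ssz S i <= tsize S, 0 < ssz S i & (0 < i -> 0 < dep S i)].
Proof. by move=> hi; have [? ? ? ?] := BND 0 hi. Qed.

Lemma dep0 S : dep S 0 = 0. Proof. by case: S. Qed.
Lemma ssz0 S : ssz S 0 = tsize S. Proof. by case: S. Qed.

Lemma LAMS S i j : i < tsize S -> i < j < i + ssz S i ->
  j + ssz S j <= i + ssz S i /\ dep S i < dep S j.
Proof. exact: LAM. Qed.

Lemma ANCS S w f : w < tsize S -> f <= dep S w ->
  exists v, v <= w < v + ssz S v /\ dep S v = f.
Proof. move=> hw hf; exact: (@ANC S 0 w f hw). Qed.

Lemma SLsize S i : i < tsize S -> size (sublabels S i) = ssz S i.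
Proof.
move=> hi; have [h1 _ _] := BNDS hi.
rewrite /sublabels size_map size_take size_drop -/(nnodes S) nnodesE.
case: ifP => //; lia.
Qed.

Lemma SLnth S i j : i < tsize S -> j < ssz S i -> nth 0 (sublabels S i) j = lab S (i + j).
Proof.
move=> hi hj; have [h1 _ _] := BNDS hi.
rewrite /sublabels (nth_map x0); last by rewrite size_take size_drop -/(nnodes S) nnodesE; case: ifP; lia.
by rewrite nth_take // nth_drop.
Qed.

Lemma anc_uniq S v i w : v < tsize S -> i < tsize S ->
  v <= w < v + ssz S v -> i <= w < i + ssz S i -> dep S v = dep S i -> v = i.
Proof.
move=> hv hi h1 h2 e.
case: (ltngtP v i) => // h.
  by have [_ ?] := @LAMS S v i hv ltac:(lia); lia.
by have [_ ?] := @LAMS S i v hi ltac:(lia); lia.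
Qed.

Section Cert.
Variable S : ltree.
Hypothesis st : sticky S.

Lemma CERT1 i : 0 < i < tsize S ->
  [/\ i <= cert S i < i + ssz S i, lab S (cert S i) < dep S i &
      forall k, i <= k < cert S i -> dep S i <= lab S k].
Proof.
move=> hi; case: st => _ [c2 _].
have hh := c2 i ltac:(rewrite nnodesE; lia).
have hi' : i < tsize S by lia.
have hf : find (fun l => l < dep S i) (sublabels S i) < ssz S i.
  by rewrite -(SLsize hi') -has_find.
rewrite /cert; split.
- lia.
- by have := nth_find 0 hh; rewrite SLnth.
move=> k hk; have := @before_find _ 0 (fun l => l < dep S i) (sublabels S i) (k - i) ltac:(lia).
rewrite SLnth //; last lia.
by rewrite subnKC; [move/negbT; rewrite -leqNgt | lia].
Qed.

Lemma NC i j : 0 < i < tsize S -> i < j <= cert S i -> cert S j <= cert S i.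
Proof.
move=> hi hj; have [/andP [c1 c2] c3 c4] := CERT1 hi.
have [l1 l2] := @LAMS S i j ltac:(lia) ltac:(lia).
have hi' : i < tsize S by lia.
have [b1 _ _] := BNDS hi'.
have hj' : 0 < j < tsize S by lia.
have [/andP [d1 d2] d3 d4] := CERT1 hj'.
case: (ltnP (cert S i) (j + ssz S j)) => h; last lia.
case: (leqP (cert S j) (cert S i)) => // h2.
by have := d4 (cert S i) ltac:(lia); lia.
Qed.

Lemma valid_cert : validm (cert S) 1 (tsize S).
Proof.
move=> i hi; have [/andP [c1 c2] c3 c4] := CERT1 hi.
have hi' : i < tsize S by lia.
have [b1 _ _] := BNDS hi'.
split; first lia.
move=> j hj; exact: NC.
Qed.

End Cert.

Lemma cert_char S i c : 0 < i < tsize S -> i <= c < i + ssz S i ->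
  lab S c < dep S i -> (forall k, i <= k < c -> dep S i <= lab S k) -> cert S i = c.
Proof.
move=> hi hc h1 h2; rewrite /cert.
have hi' : i < tsize S by lia.
rewrite (@find_nth_eq _ _ (c - i)); first lia.
- by rewrite SLsize //; lia.
- by rewrite SLnth ?subnKC //; lia.
move=> j hj; rewrite SLnth //; last lia.
by rewrite -leqNgt; apply: h2; lia.
Qed.

Lemma Dw_eq S : Dw S = Wm (cert S) 1 (tsize S).
Proof. by rewrite /Dw /Wm /cnt /ccount nnodesE subn1. Qed.

Lemma ellE S i : 0 < i < tsize S -> ell (Ew S) i = 2 * (ssz S i).-1.
Proof.
move=> hi; have hi' : i < tsize S by lia.
have [e [t' [h1 h2 h3 h4 [h5 h6]]]] := NODE 0 hi'.
have [A [B [eA nA]]] := h6 ltac:(lia).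
have bt := proj1 (Ew_props t'); have i0 : 0 < i by lia.
rewrite eA ell_eq // size_balanced //.
by rewrite (proj2 (Ew_props t')) sszE /ps h3.
Qed.

Lemma dyck_of_bal n w : balanced w -> nups w = n -> dyck n w.
Proof.
move=> b e; have := size_balanced b; move: b; rewrite /balanced /dyck => /andP [_ ->] ->.
by rewrite e !eqxx.
Qed.

Lemma bal_of_dyck n w : dyck n w -> balanced w.
Proof.
case/and3P => /eqP s /eqP u p; rewrite /balanced p andbT.
by move: s; rewrite size_ud u => s; apply/eqP; lia.
Qed.

Lemma edgesE S n : edges S = n -> tsize S = n.+1.
Proof. by rewrite /edges => <-; rewrite prednK // tsize_gt0. Qed.

Lemma part1 n S : sticky S -> edges S = n ->
  [/\ dyck n (Dw S), dyck n (Ew S) & tamari_le n (Dw S) (Ew S)].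
Proof.
move=> st eS; have hN := edgesE eS.
have V := valid_cert st.
split.
- rewrite Dw_eq; apply: dyck_of_bal; [exact: WB | by rewrite nups_Wm hN subn1].
- apply: dyck_of_bal; [exact: (proj1 (Ew_props S)) | by rewrite (proj2 (Ew_props S)) hN].
move=> i hi; rewrite Dw_eq.
have hi1 : 1 <= i < tsize S by lia.
have := ellW V hi1; rewrite subn1 prednK; last lia.
move=> ->; rewrite ellE; last lia.
have hi2 : 0 < i < tsize S by lia.
have [/andP [c1 c2] _ _] := CERT1 st hi2.
lia.
Qed.

Lemma LABLE S1 S2 : sticky S1 -> sticky S2 -> tsize S1 = tsize S2 ->
  (forall i, dep S1 i = dep S2 i) ->
  (forall i, 0 < i < tsize S1 -> cert S1 i = cert S2 i) ->
  forall w, w < tsize S1 -> lab S1 w <= lab S2 w.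
Proof.
move=> s1 s2 eN ed ec w hw.
case: (posnP (lab S1 w)) => [->//|lpos].
have s1' := s1; case: s1' => c1 [_ c3].
have l1 := c1 w ltac:(rewrite nnodesE; lia).
have [v [hv ev]] := ANCS hw l1.
have v0 : 0 < v.
  by case: (posnP v) ev => // ->; rewrite dep0; lia.
have hv1 : 0 < v < tsize S1 by lia.
have [/andP [k1 k2] k3 k4] := CERT1 s1 hv1.
have hsz := SLsize (_ : v < tsize S1).
have hall := c3 v ltac:(rewrite nnodesE; lia) (w - v).
have hw2 : w < cert S1 v.
  case: (ltngtP w (cert S1 v)) => // h.
  - move: hall; rewrite SLsize; last lia.
    move=> /(_ ltac:(lia)); rewrite SLnth; [|lia|lia]; rewrite subnKC; last lia.
    move=> /(_ (esym ev)) /(all_nthP 0) H.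
    have := H (cert S1 v - v); rewrite size_take SLsize; last lia.
    rewrite ifT; last lia.
    move=> /(_ ltac:(lia)); rewrite nth_take; last lia.
    rewrite SLnth; [|lia|lia]; rewrite subnKC; lia.
  - by move: k3; rewrite -h -ev; lia.
have hv2 : 0 < v < tsize S2 by lia.
have [_ _ k4'] := CERT1 s2 hv2.
have := k4' w; rewrite -ec // -ed ev; apply; lia.
Qed.

Lemma nth_map_tot (T : Type) (f : nat * nat * nat -> T) L i :
  nth (f x0) [seq f x | x <- L] i = f (nth x0 L i).
Proof.
case: (ltnP i (size L)) => h; first by rewrite (nth_map x0).
by rewrite !nth_default ?size_map.
Qed.

Lemma part2 n S1 S2 : sticky S1 -> sticky S2 -> edges S1 = n -> edges S2 = n ->
  Dw S1 = Dw S2 -> Ew S1 = Ew S2 -> S1 = S2.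
Proof.
move=> s1 s2 e1 e2 eD eE.
have h1 := edgesE e1; have h2 := edgesE e2.
have eN : tsize S1 = tsize S2 by rewrite h1 h2.
have sh := SHAPE 0 eE.
have ed : forall i, dep S1 i = dep S2 i.
  move=> i; have := congr1 (fun L => nth (0, 0) L i) sh.
  by rewrite -[(0,0)]/((fun x : nat * nat * nat => (x.1.1, x.2)) x0) !(nth_map_tot (fun x => (x.1.1, x.2))) => [[]].
have ec : forall i, 0 < i < tsize S1 -> cert S1 i = cert S2 i.
  move=> i hi.
  have hi1 : 1 <= i < tsize S1 by lia.
  have hi2 : 1 <= i < tsize S2 by lia.
  have := ellW (valid_cert s1) hi1; have := ellW (valid_cert s2) hi2.
  rewrite -!Dw_eq eD => -> e.
  have hi3 : 0 < i < tsize S2 by lia.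
  have [/andP [a1 _] _ _] := CERT1 s1 hi.
  have [/andP [a2 _] _ _] := CERT1 s2 hi3.
  lia.
have el : forall w, w < tsize S1 -> lab S1 w = lab S2 w.
  move=> w hw; apply/eqP; rewrite eqn_leq; apply/andP; split.
    exact: LABLE.
  apply: LABLE => //.
  by move=> i hi; rewrite ec //; lia.
  by lia.
apply: (INJ (d := 0) eE).
apply: (@eq_from_nth _ 0); first by rewrite !size_map !size_pre.
move=> i; rewrite size_map size_pre => hi.
rewrite -[0]/((fun x : nat * nat * nat => x.1.2) x0) !nth_map_tot.
exact: el.
Unshelve. all: lia.
Qed.

Lemma EXT w : balanced w -> exists t, Ew t = w.
Proof.
move=> bw.
suff [ts ets] : exists ts, EF ts = w by exists (LNode 0 ts).
move: w bw; apply: (@balanced_ind (fun w => exists ts, EF ts = w)).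
  by exists [::].
move=> X Y _ _ [ts1 e1] [ts2 e2].
by exists (LNode 0 ts1 :: ts2); rewrite EF_cons Ew_eq e1 e2.
Qed.

Lemma bigmax_ex (s : seq nat) (P : pred nat) (G : nat -> nat) :
  0 < \max_(v <- s | P v) G v ->
  exists v, [/\ v \in s, P v & \max_(v <- s | P v) G v = G v].
Proof.
elim: s => [|x s IH]; first by rewrite big_nil.
rewrite big_cons; case: ifP => Px.
  case: (leqP (\max_(j <- s | P j) G j) (G x)) => h.
    by move=> _; exists x; rewrite mem_head Px; split => //; apply/maxn_idPl.
  move=> /IH [v [h1 h2 h3]].
  by exists v; rewrite in_cons h1 orbT h2; split.
by move=> /IH [v [h1 h2 h3]]; exists v; rewrite in_cons h1 orbT h2.
Qed.

Lemma part3 n P Q : dyck n P -> dyck n Q -> tamari_le n P Q ->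
  exists S : ltree, [/\ sticky S, edges S = n, Dw S = P & Ew S = Q].
Proof.
move=> dP dQ tam.
have bQ := bal_of_dyck dQ; have [T eT] := EXT bQ.
have nQ : nups Q = n by case/and3P: dQ => _ /eqP.
have nP : nups P = n by case/and3P: dP => _ /eqP.
have hNT : tsize T = n.+1.
  by have := proj2 (Ew_props T); rewrite eT nQ => ->; rewrite prednK // tsize_gt0.
have bP := bal_of_dyck dP.
have [m [Vm Pm]] := Gp bP 1; rewrite nP add1n in Vm Pm.
pose F w := \max_(v <- iota 1 w | w < m v) dep T v.
have [S [eS tS hS]] := RL T 0 F.
have NS : tsize S = n.+1 by rewrite tS.
have edS : forall i, dep S i = dep T i.
  move=> i; case: (ltnP i (tsize T)) => h; first by rewrite depE /pd hS.
  rewrite !depE /pd !nth_default //; rewrite size_pre; lia.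
have esS : forall i, ssz S i = ssz T i.
  move=> i; case: (ltnP i (tsize T)) => h; first by rewrite sszE /ps hS.
  rewrite !sszE /ps !nth_default //; rewrite size_pre; lia.
have elS : forall i, i < n.+1 -> lab S i = F i.
  by move=> i h; rewrite labE /pl hS // hNT.
have tamS : forall i, 0 < i < n.+1 -> m i < i + ssz S i.
  move=> i hi; have := tam i ltac:(lia).
  have hi1 : 1 <= i < n.+1 by lia.
  have := ellW Vm hi1; rewrite subn1 prednK; last lia.
  rewrite -Pm => ->; rewrite -eT ellE; last lia.
  have hiT : i < tsize T by lia.
  have [_ hs _] := BNDS hiT.
  by rewrite esS; lia.
have Fup : forall w v, w < n.+1 -> 1 <= v -> v <= w -> w < m v -> dep S v <= lab S w.
  move=> w v hw hv1 hv2 hv3; rewrite elS // edS /F.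
  by apply: (leq_bigmax_seq v) => //; rewrite mem_iota; lia.
have Flt : forall i, 0 < i < n.+1 -> lab S (m i) < dep S i.
  move=> i hi; have [/andP [mi1 mi2] nc] := Vm i ltac:(lia).
  have hiS : i < tsize S by lia.
  have [_ _ dpos] := BNDS hiS.
  rewrite elS // /F.
  have : \max_(v <- iota 1 (m i) | m i < m v) dep T v <= (dep S i).-1.
    apply/bigmax_leqP_seq => v; rewrite mem_iota => hv hmv; rewrite -edS.
    case: (ltngtP v i) => hvi.
    - have [_ ?] := @LAMS S v i ltac:(lia) ltac:(have := tamS v ltac:(lia); lia).
      lia.
    - by have := nc v ltac:(lia); lia.
    - by subst v; lia.
  have := dpos ltac:(lia); lia.
have F3 : forall w, w < n.+1 -> 0 < lab S w ->
    exists v, [/\ 1 <= v, v <= w, w < m v & dep S v = lab S w].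
  move=> w hw; rewrite elS // /F => /bigmax_ex [v [h1 h2 h3]].
  by exists v; rewrite h3 edS; move: h1; rewrite mem_iota => h1; split => //; lia.
have ecert : forall i, 0 < i < n.+1 -> cert S i = m i.
  move=> i hi; have [/andP [mi1 mi2] nc] := Vm i ltac:(lia).
  apply: cert_char.
  - by rewrite NS.
  - by have := tamS i hi; lia.
  - exact: Flt.
  - by move=> k hk; apply: Fup; lia.
have st : sticky S.
  split; [|split].
  - move=> i; rewrite nnodesE NS => hi; rewrite elS // /F.
    apply/bigmax_leqP_seq => v; rewrite mem_iota => hv hmv; rewrite -edS.
    case: (ltngtP v i) => hvi; last by subst.
    + have [_ ?] := @LAMS S v i ltac:(lia) ltac:(have := tamS v ltac:(lia); lia).
      lia.
    + lia.
  - move=> i; rewrite nnodesE NS => hi; apply/(has_nthP 0).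
    have [/andP [mi1 mi2] nc] := Vm i ltac:(lia).
    exists (m i - i).
      by rewrite SLsize; [have := tamS i hi; lia | lia].
    by rewrite SLnth; [rewrite subnKC //; exact: Flt | lia | have := tamS i hi; lia].
  - move=> i; rewrite nnodesE NS => hi j.
    rewrite SLsize; last lia.
    move=> hj; rewrite SLnth //; last lia.
    case: (posnP i) => [->|ip] hl.
      by apply/(all_nthP 0) => k _; rewrite dep0.
    have hiS : i < tsize S by lia.
    have [b1 _ dpos] := BNDS hiS.
    have [v [hv1 hv2 hv3 ev]] := F3 (i + j) ltac:(lia) ltac:(rewrite hl; apply: dpos; lia).
    have tv := tamS v ltac:(lia).
    have evi : v = i.
      apply: (@anc_uniq S v i (i + j)); try lia.
    subst v.
    apply/(all_nthP 0) => k; rewrite size_take SLsize; last lia.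
    rewrite ifT; last lia.
    move=> hk; rewrite nth_take // SLnth; [|lia|lia].
    apply: Fup; lia.
exists S; split => //.
- by rewrite /edges NS.
- rewrite Dw_eq NS Pm; apply: WE => i hi; exact: ecert.
- by rewrite eS.
Unshelve. all: lia.
Qed.


Theorem mainTheorem11 (n : nat) (hn : 1 <= n) :
  (* the map lands in Tamari intervals of order n *)
  (forall S : ltree, sticky S -> edges S = n ->
     [/\ dyck n (Dw S), dyck n (Ew S) & tamari_le n (Dw S) (Ew S)]) /\
  (* injective on sticky trees with n edges *)
  (forall S1 S2 : ltree, sticky S1 -> sticky S2 -> edges S1 = n -> edges S2 = n ->
     Dw S1 = Dw S2 -> Ew S1 = Ew S2 -> S1 = S2) /\
  (* surjective onto Tamari intervals of order n *)
  (forall P Q : seq bool, dyck n P -> dyck n Q -> tamari_le n P Q ->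
     exists S : ltree, [/\ sticky S, edges S = n, Dw S = P & Ew S = Q]).
Proof.
split; [|split].
- move=> S; exact: part1.
- move=> S1 S2; exact: part2.
- move=> P Q; exact: part3.
Qed.
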